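(* Consider the system $\dot{x} = \vartheta$, $\dot{\vartheta} = -\lambda \vartheta - x u + x - x^3$, $\dot{u} = -\alpha u - \beta x \vartheta$ with $\lambda \geq 0$, $\alpha > 0$, $\beta > 0$, and assume $\alpha(\sqrt{\lambda^2+4}+\lambda) > 2(\beta-2)$. Let $L > 0$ be a number with $L > \frac{\sqrt{\lambda^2+4}-\lambda}{2}$ and $K = \frac{\beta L}{\alpha + 2L} < 1$, and set $M = 1 - K$. Let $(x^+(t), \vartheta^+(t), u^+(t))$ be the positive outgoing separatrix of the zero saddle equilibrium $(0,0,0)$, i.e. $\lim_{t\to-\infty}(x^+(t),\vartheta^+(t),u^+(t)) = (0,0,0)$ and $x^+(t) > 0$ for all $t \in (-\infty, \tau)$ for some number $\tau$. Suppose that $x^+(t) \geq 0$ for all $t \in (-\infty, \tau]$ and $M > 0$. Then there exists a number $R > 0$ (independent of $\tau$) such that $x^+(t) \leq R$, $|\vartheta^+(t)| \leq R$, $|u^+(t)| \leq R$ for all $t \in (-\infty, \tau]$.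
   Context: The system is a Lorenz-like system obtained from the Lorenz system by a smooth change of variables; its equilibria are $S_0 = (0,0,0)$ (always a saddle for positive parameters) and $S_\pm = (\pm 1, 0, 0)$. The inequality $\alpha(\sqrt{\lambda^2+4}+\lambda) > 2(\beta-2)$ guarantees existence of $L>0$ with $L > \frac{\sqrt{\lambda^2+4}-\lambda}{2}$ and $\frac{\beta L}{\alpha+2L} < 1$. *)

(* Defs.v *)
From Stdlib Require Import Reals.
From Coquelicot Require Import Coquelicot.
Open Scope R_scope.

(* (x, th, u) solves the Lorenz-like system
     x' = th,  th' = -lam th - x u + x - x^3,  u' = -alpha u - beta x th
   at every time t <= tau (two-sided derivatives, so the solution lives on an
   open interval containing (-oo, tau]). *)
Definition solves_on (lam alpha beta : R) (x th u : R -> R) (tau : R) : Prop :=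
  forall t, t <= tau ->
    is_derive x t (th t) /\
    is_derive th t (- lam * th t - x t * u t + x t - x t ^ 3) /\
    is_derive u t (- alpha * u t - beta * x t * th t).

Definition pos_separatrix_upto (lam alpha beta : R) (x th u : R -> R) (tau : R) : Prop :=
  solves_on lam alpha beta x th u tau /\
  is_lim x m_infty 0 /\ is_lim th m_infty 0 /\ is_lim u m_infty 0 /\
  (forall t, t < tau -> 0 < x t).

(* Main.v *)
Require Import Defs.
From Stdlib Require Import Reals Lra Psatz.
From Coquelicot Require Import Coquelicot.
Open Scope R_scope.

Lemma dl_ext (f g : R -> R) x l : (forall t, f t = g t) ->
  derivable_pt_lim f x l -> derivable_pt_lim g x l.
Proof.
  intros E H eps Heps. destruct (H eps Heps) as [d Hd]. exists d.
  intros h H0 H1. rewrite <- !E. now apply Hd.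
Qed.

Lemma dl_eq (f : R -> R) x l l' : derivable_pt_lim f x l -> l = l' -> derivable_pt_lim f x l'.
Proof. intros H ->; exact H. Qed.

Lemma dl_add (f g : R -> R) x df dg : derivable_pt_lim f x df -> derivable_pt_lim g x dg ->
  derivable_pt_lim (fun t => f t + g t) x (df + dg).
Proof. intros; exact (derivable_pt_lim_plus f g x df dg H H0). Qed.

Lemma dl_mul (f g : R -> R) x df dg : derivable_pt_lim f x df -> derivable_pt_lim g x dg ->
  derivable_pt_lim (fun t => f t * g t) x (df * g x + f x * dg).
Proof. intros; exact (derivable_pt_lim_mult f g x df dg H H0). Qed.

Lemma dl_const (c x : R) : derivable_pt_lim (fun _ => c) x 0.
Proof. apply derivable_pt_lim_const. Qed.

Lemma dl_comp (f P : R -> R) x df dP : derivable_pt_lim f x df -> derivable_pt_lim P (f x) dP ->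
  derivable_pt_lim (fun t => P (f t)) x (dP * df).
Proof. intros; exact (derivable_pt_lim_comp f P x df dP H H0). Qed.

Lemma dl_exp (k x : R) : derivable_pt_lim (fun t => exp (- k * t)) x (- k * exp (- k * x)).
Proof. apply is_derive_Reals. auto_derive. auto. ring. Qed.

Lemma dl_cont (f : R -> R) x l : derivable_pt_lim f x l -> continuity_pt f x.
Proof. intros H. apply derivable_continuous_pt. exists l. exact H. Qed.

Lemma c_add (f g : R -> R) x : continuity_pt f x -> continuity_pt g x -> continuity_pt (fun t => f t + g t) x.
Proof. intros; exact (continuity_pt_plus f g x H H0). Qed.
Lemma c_mul (f g : R -> R) x : continuity_pt f x -> continuity_pt g x -> continuity_pt (fun t => f t * g t) x.
Proof. intros; exact (continuity_pt_mult f g x H H0). Qed.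
Lemma c_const (c x : R) : continuity_pt (fun _ => c) x.
Proof. apply continuity_pt_const. intros a b; reflexivity. Qed.
Lemma c_abs (f : R -> R) x : continuity_pt f x -> continuity_pt (fun t => Rabs (f t)) x.
Proof. intros H. exact (continuity_pt_comp f Rabs x H (Rcontinuity_abs (f x))). Qed.

Lemma lim_minf (f : R -> R) : is_lim f m_infty 0 ->
  forall eps, 0 < eps -> exists T, forall t, t < T -> Rabs (f t) < eps.
Proof.
  intros H eps He. apply is_lim_spec in H. destruct (H (mkposreal eps He)) as [T HT].
  exists T. intros t Ht. specialize (HT t Ht). simpl in HT. rewrite Rminus_0_r in HT. exact HT.
Qed.

Lemma leftmax_eps (f : R -> R) d s p t1 eps : s < p -> 0 < eps -> derivable_pt_lim f p d ->
  (forall t, s <= t <= p -> f t + eps * (t1 - t) <= f p + eps * (t1 - p)) -> eps <= d.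
Proof.
  intros Hsp He Hd Hm. destruct (Rle_or_lt eps d) as [?|Hlt]; [assumption|exfalso].
  destruct (Hd ((eps - d)/2) ltac:(lra)) as [del Hdel].
  set (h := - Rmin (del/2) (p - s)).
  assert (Hm1 : Rmin (del/2) (p - s) <= del/2) by apply Rmin_l.
  assert (Hm2 : Rmin (del/2) (p - s) <= p - s) by apply Rmin_r.
  assert (Hm3 : 0 < Rmin (del/2) (p - s)) by (apply Rmin_pos; [pose proof (cond_pos del); lra | lra]).
  assert (Hh0 : h <> 0) by (unfold h; lra).
  assert (Hh1 : Rabs h < del) by (unfold h; rewrite Rabs_Ropp, Rabs_pos_eq; pose proof (cond_pos del); lra).
  specialize (Hdel h Hh0 Hh1).
  specialize (Hm (p + h) ltac:(unfold h; lra)).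
  set (q := (f (p + h) - f p) / h) in Hdel.
  assert (Hq : q * h = f (p + h) - f p) by (unfold q; field; exact Hh0).
  apply Rabs_def2 in Hdel. destruct Hdel as [Hd1 Hd2].
  assert (h < 0) by (unfold h; lra).
  nra.
Qed.

Lemma barrier (f : R -> R) s t1 C : s < t1 -> (forall t, s <= t <= t1 -> continuity_pt f t) ->
  f s < C -> C < f t1 ->
  exists p eps, s < p /\ p <= t1 /\ 0 < eps /\ C < f p /\
    forall t, s <= t <= p -> f t + eps * (t1 - t) <= f p + eps * (t1 - p).
Proof.
  intros Hst Hc Hs Ht.
  set (eps := (f t1 - C) / (2 * (t1 - s))).
  assert (He : eps * (t1 - s) = (f t1 - C) / 2) by (unfold eps; field; lra).
  assert (Hep : 0 < eps) by (unfold eps; apply Rdiv_lt_0_compat; lra).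
  destruct (continuity_ab_maj (fun t => f t + eps * (t1 - t)) s t1 ltac:(lra)) as [p [Hp1 Hp2]].
  { intros c Hc'. apply c_add. apply Hc; lra. apply c_mul. apply c_const.
    apply c_add. apply c_const. apply dl_cont with (-1).
    apply dl_eq with (-(1)); [|ring]. exact (derivable_pt_lim_opp id c 1 (derivable_pt_lim_id c)). }
  pose proof (Hp1 t1 ltac:(lra)) as H1. pose proof (Hp1 s ltac:(lra)) as H2.
  assert (s < p).
  { destruct (Rle_lt_or_eq_dec s p) as [?|E]; [lra|auto|]. subst p.
    replace (t1 - t1) with 0 in H1 by ring. lra. }
  exists p, eps. repeat split; try lra.
  - replace (t1 - t1) with 0 in H1 by ring.
    assert (eps * (t1 - p) <= eps * (t1 - s)) by (apply Rmult_le_compat_l; lra). lra.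
  - intros t Ht'. apply Hp1. lra.
Qed.

Lemma barrier_d (f df : R -> R) s t1 C : s < t1 ->
  (forall t, s <= t <= t1 -> derivable_pt_lim f t (df t)) ->
  f s < C -> C < f t1 -> exists p, s < p /\ p <= t1 /\ C < f p /\ 0 < df p.
Proof.
  intros Hst Hd Hs Ht.
  destruct (barrier f s t1 C Hst) as [p [eps [H1 [H2 [H3 [H4 H5]]]]]]; auto.
  { intros; eapply dl_cont; apply Hd; auto. }
  exists p. repeat split; auto.
  assert (eps <= df p); [|lra].
  apply (leftmax_eps f (df p) s p t1 eps); auto. apply Hd; lra.
Qed.
Definition mx (a b : R) := (a + b + Rabs (a - b)) / 2.
Lemma mx_l a b : a <= mx a b.
Proof. unfold mx. pose proof (Rle_abs (a-b)); pose proof (Rle_abs (-(a-b))); rewrite Rabs_Ropp in *; lra. Qed.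
Lemma mx_r a b : b <= mx a b.
Proof. unfold mx. pose proof (Rle_abs (a-b)); pose proof (Rle_abs (-(a-b))); rewrite Rabs_Ropp in *; lra. Qed.
Lemma mx_cases a b : (mx a b = a /\ b <= a) \/ (mx a b = b /\ a <= b).
Proof. unfold mx. destruct (Rle_or_lt b a).
  - left. rewrite Rabs_pos_eq by lra. split; lra.
  - right. rewrite Rabs_left by lra. split; lra.
Qed.
Lemma c_mx (f g : R -> R) x : continuity_pt f x -> continuity_pt g x -> continuity_pt (fun t => mx (f t) (g t)) x.
Proof.
  intros. unfold mx. unfold Rdiv. apply c_mul. apply c_add. apply c_add; auto. apply c_abs.
  exact (continuity_pt_minus f g x H H0). apply c_const.
Qed.

Lemma core (g h dg dh x : R -> R) a1 a2 b k s t1 m :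
  s < t1 -> 0 < b -> 0 < m ->
  (forall t, s <= t <= t1 -> derivable_pt_lim g t (dg t) /\ derivable_pt_lim h t (dh t) /\
     0 <= x t /\ - a1 * g t + b * x t * h t <= dg t /\ - a2 * h t + x t * g t <= dh t /\
     b * x t < a1 + k /\ x t < a2 + k) ->
  - g s * exp (- k * s) < m -> - h s * exp (- k * s) < m ->
  - g t1 * exp (- k * t1) <= m /\ - h t1 * exp (- k * t1) <= m.
Proof.
  intros Hst Hb Hm Hall Hgs Hhs.
  set (G := fun t => - g t * exp (- k * t)).
  set (H := fun t => - h t * exp (- k * t)).
  assert (dG : forall t, s <= t <= t1 -> derivable_pt_lim G t (- dg t * exp (- k * t) + - g t * (- k * exp (- k * t)))).
  { intros t Ht. unfold G. apply (dl_mul (fun t => - g t) (fun t => exp (-k*t))); [|apply dl_exp].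
    apply dl_eq with (-1 * dg t); [|ring].
    apply dl_ext with (fun t => (-1) * g t); [intros; ring|].
    apply dl_eq with (0 * g t + -1 * dg t); [|ring]. apply dl_mul. apply dl_const. apply Hall; auto. }
  assert (dH : forall t, s <= t <= t1 -> derivable_pt_lim H t (- dh t * exp (- k * t) + - h t * (- k * exp (- k * t)))).
  { intros t Ht. unfold H. apply (dl_mul (fun t => - h t) (fun t => exp (-k*t))); [|apply dl_exp].
    apply dl_eq with (-1 * dh t); [|ring].
    apply dl_ext with (fun t => (-1) * h t); [intros; ring|].
    apply dl_eq with (0 * h t + -1 * dh t); [|ring]. apply dl_mul. apply dl_const. apply Hall; auto. }
  destruct (Rle_or_lt (mx (G t1) (H t1)) m) as [Hle|Hgt].
  { split; [apply Rle_trans with (mx (G t1) (H t1)); [apply mx_l|exact Hle]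
           |apply Rle_trans with (mx (G t1) (H t1)); [apply mx_r|exact Hle]]. }
  exfalso.
  destruct (barrier (fun t => mx (G t) (H t)) s t1 m Hst) as [p [eps [H1 [H2 [H3 [H4 H5]]]]]]; auto.
  { intros t Ht. apply c_mx; eapply dl_cont; [apply dG|apply dH]; auto. }
  { destruct (mx_cases (G s) (H s)) as [[-> _]|[-> _]]; auto. }
  destruct (Hall p ltac:(lra)) as [_ [_ [Hx [Hg [Hh [Hk1 Hk2]]]]]].
  pose proof (exp_pos (- k * p)) as Ep. set (E := exp (- k * p)) in *.
  destruct (mx_cases (G p) (H p)) as [[Ef Hc]|[Ef Hc]]; rewrite Ef in H4.
  - assert (eps <= - dg p * E + - g p * (- k * E)).
    { apply (leftmax_eps G _ s p t1 eps); auto. apply dG; lra.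
      intros t Ht. specialize (H5 t Ht). rewrite Ef in H5. pose proof (mx_l (G t) (H t)). lra. }
    unfold G, H in *. fold E in H4, Hc.
    assert (- g p > 0) by nra.
    assert (- h p <= - g p) by nra.
    assert (b * x p * (- h p) <= b * x p * (- g p)) by (apply Rmult_le_compat_l; nra).
    nra.
  - assert (eps <= - dh p * E + - h p * (- k * E)).
    { apply (leftmax_eps H _ s p t1 eps); auto. apply dH; lra.
      intros t Ht. specialize (H5 t Ht). rewrite Ef in H5. pose proof (mx_r (G t) (H t)). lra. }
    unfold G, H in *. fold E in H4, Hc.
    assert (- h p > 0) by nra.
    assert (- g p <= - h p) by nra.
    assert (x p * (- g p) <= x p * (- h p)) by (apply Rmult_le_compat_l; nra).
    nra.
Qed.

Lemma sol_d lam alpha beta (x th u : R -> R) tau t : solves_on lam alpha beta x th u tau -> t <= tau ->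
  derivable_pt_lim x t (th t) /\
  derivable_pt_lim th t (- lam * th t - x t * u t + x t - x t ^ 3) /\
  derivable_pt_lim u t (- alpha * u t - beta * x t * th t).
Proof.
  intros H Ht. destruct (H t Ht) as [A [B C]].
  split; [|split]; apply is_derive_Reals; assumption.
Qed.

Lemma dl_sq (f : R -> R) t df : derivable_pt_lim f t df ->
  derivable_pt_lim (fun t => f t * f t) t (2 * f t * df).
Proof. intros H. apply dl_eq with (df * f t + f t * df); [|ring]. apply dl_mul; auto. Qed.

Lemma dl_scal (c : R) (f : R -> R) t df : derivable_pt_lim f t df ->
  derivable_pt_lim (fun t => c * f t) t (c * df).
Proof. intros H. apply dl_eq with (0 * f t + c * df); [|ring]. apply (dl_mul (fun _ => c) f); auto. apply dl_const. Qed.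

Lemma lim_small lam alpha beta (x th u : R -> R) tau eta :
  pos_separatrix_upto lam alpha beta x th u tau -> 0 < eta ->
  forall T, exists s, s < T /\ Rabs (x s) < eta /\ Rabs (th s) < eta /\ Rabs (u s) < eta.
Proof.
  intros [_ [Hx [Hth [Hu _]]]] He T.
  destruct (lim_minf x Hx eta He) as [T1 H1].
  destruct (lim_minf th Hth eta He) as [T2 H2].
  destruct (lim_minf u Hu eta He) as [T3 H3].
  exists (Rmin T (Rmin T1 (Rmin T2 T3)) - 1).
  assert (Rmin T (Rmin T1 (Rmin T2 T3)) <= T) by apply Rmin_l.
  assert (Rmin T (Rmin T1 (Rmin T2 T3)) <= Rmin T1 (Rmin T2 T3)) by apply Rmin_r.
  assert (Rmin T1 (Rmin T2 T3) <= T1) by apply Rmin_l.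
  assert (Rmin T1 (Rmin T2 T3) <= Rmin T2 T3) by apply Rmin_r.
  assert (Rmin T2 T3 <= T2) by apply Rmin_l.
  assert (Rmin T2 T3 <= T3) by apply Rmin_r.
  repeat split; [lra|apply H1|apply H2|apply H3]; lra.
Qed.

Lemma exp0k t : exp (- 0 * t) = 1.
Proof. replace (- 0 * t) with 0 by ring. apply exp_0. Qed.

Lemma gh_nonneg lam alpha beta L K (x th u : R -> R) tau :
  0 <= lam -> 0 < alpha -> 0 < beta -> 0 < L -> K * (alpha + 2 * L) = beta * L -> 0 < K ->
  0 < beta - 2 * K -> 0 < L ^ 2 + lam * L - 1 -> 0 < 1 - K ->
  pos_separatrix_upto lam alpha beta x th u tau -> (forall t, t <= tau -> 0 <= x t) ->
  forall t, t <= tau -> 0 <= u t + K * (x t * x t) /\ 0 <= L * x t - th t.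
Proof.
  intros Hlam Ha Hb HL HK HK0 Hbk Hc HM Hsep Hxnn.
  set (b := beta - 2 * K).
  set (g := fun t => u t + K * (x t * x t)).
  set (h := fun t => L * x t - th t).
  set (dg := fun t => (- alpha * u t - beta * x t * th t) + K * (2 * x t * th t)).
  set (dh := fun t => L * th t - (- lam * th t - x t * u t + x t - x t ^ 3)).
  assert (Hd : forall t, t <= tau -> derivable_pt_lim g t (dg t) /\ derivable_pt_lim h t (dh t)).
  { intros t Ht. destruct (sol_d lam alpha beta x th u tau t (proj1 Hsep) Ht) as [D1 [D2 D3]].
    split.
    - unfold g, dg. apply dl_add; auto. apply dl_scal. apply dl_sq; auto.
    - unfold h, dh. apply dl_eq with (L * th t + - (- lam * th t - x t * u t + x t - x t ^ 3)); [|ring].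
      apply dl_add. apply dl_scal; auto.
      apply dl_eq with (-1 * (- lam * th t - x t * u t + x t - x t ^ 3)); [|ring].
      apply dl_ext with (fun t => -1 * th t); [intros; ring|]. apply dl_scal; auto. }
  assert (Hineq : forall t, t <= tau ->
     - alpha * g t + b * x t * h t <= dg t /\ - (L + lam) * h t + x t * g t <= dh t).
  { intros t Ht. pose proof (Hxnn t Ht) as X. unfold g, h, dg, dh, b. split.
    - assert (E : (- alpha * u t - beta * x t * th t) + K * (2 * x t * th t)
                  - (- alpha * (u t + K * (x t * x t)) + (beta - 2 * K) * x t * (L * x t - th t))
                  = x t * x t * (K * (alpha + 2 * L) - beta * L)) by ring.
      rewrite HK in E. lra.
    - assert (E : L * th t - (- lam * th t - x t * u t + x t - x t ^ 3)
                  - (- (L + lam) * (L * x t - th t) + x t * (u t + K * (x t * x t)))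
                  = (L ^ 2 + lam * L - 1) * x t + (1 - K) * (x t * x t * x t)) by ring.
      assert (0 <= (L ^ 2 + lam * L - 1) * x t) by (apply Rmult_le_pos; lra).
      assert (0 <= (1 - K) * (x t * x t * x t)) by (apply Rmult_le_pos; [lra| apply Rmult_le_pos; [apply Rmult_le_pos|]; lra]).
      lra. }
  set (del := Rmin (alpha / (b + 1)) L).
  assert (Hdel1 : del <= alpha / (b + 1)) by apply Rmin_l.
  assert (Hdel2 : del <= L) by apply Rmin_r.
  assert (Hdel0 : 0 < del) by (apply Rmin_pos; [apply Rdiv_lt_0_compat|]; unfold b; lra).
  destruct (lim_minf x (proj1 (proj2 Hsep)) del Hdel0) as [T0 HT0].
  set (T1 := Rmin T0 tau).
  assert (T1 <= T0) by apply Rmin_l. assert (T1 <= tau) by apply Rmin_r.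
  assert (Ph1 : forall t1, t1 < T1 -> 0 <= g t1 /\ 0 <= h t1).
  { intros t1 Ht1.
    assert (Hm : forall m, 0 < m -> - g t1 <= m /\ - h t1 <= m).
    { intros m Hm.
      set (eta := Rmin 1 (m / (2 + K + L))).
      assert (eta <= 1) by apply Rmin_l. assert (eta <= m / (2 + K + L)) by apply Rmin_r.
      assert (0 < eta) by (apply Rmin_pos; [lra|apply Rdiv_lt_0_compat; lra]).
      assert (eta * (2 + K + L) <= m).
      { apply Rmult_le_reg_r with (/ (2 + K + L)). apply Rinv_0_lt_compat; lra.
        rewrite Rmult_assoc, Rinv_r by lra. unfold Rdiv in *. lra. }
      destruct (lim_small lam alpha beta x th u tau eta Hsep H3 t1) as [s [Hs [Hxs [Hths Hus]]]].
      assert (Hk := core g h dg dh x alpha (L + lam) b 0 s t1 m Hs ltac:(unfold b; lra) Hm).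
      rewrite !exp0k, !Rmult_1_r in Hk. apply Hk.
      - intros t Ht. assert (Htt : t <= tau) by lra. destruct (Hd t Htt) as [D1 D2].
        destruct (Hineq t Htt) as [I1 I2].
        assert (Xt : Rabs (x t) < del) by (apply HT0; lra).
        pose proof (Hxnn t Htt). rewrite Rabs_pos_eq in Xt by lra.
        assert (b * x t < alpha).
        { assert (x t * (b + 1) < alpha).
          { apply Rlt_le_trans with (alpha / (b + 1) * (b + 1)).
            apply Rmult_lt_compat_r; [unfold b; lra| lra].
            right; field; unfold b; lra. }
          assert (0 < b) by (unfold b; lra). nra. }
        repeat split; auto; lra.
      - unfold g. apply Rabs_def2 in Hxs. apply Rabs_def2 in Hus. destruct Hxs, Hus.
        assert (x s * x s < eta) by nra. nra.
      - unfold h. apply Rabs_def2 in Hxs. apply Rabs_def2 in Hths. destruct Hxs, Hths. nra. }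
    split; apply Rnot_lt_le; intro Hn.
    - destruct (Hm (- g t1 / 2) ltac:(lra)). lra.
    - destruct (Hm (- h t1 / 2) ltac:(lra)). lra. }
  intros t1 Ht1.
  destruct (Rlt_or_le t1 T1) as [Hlt|Hge].
  { apply Ph1; auto. }
  set (s := T1 - 1).
  destruct (continuity_ab_maj x s t1 ltac:(unfold s; lra)) as [pM [HpM1 HpM2]].
  { intros c Hc0. eapply dl_cont. apply (sol_d lam alpha beta x th u tau c (proj1 Hsep)). lra. }
  set (k := (b + 1) * x pM + 1).
  assert (0 <= x pM) by (apply Hxnn; lra).
  assert (Hm : forall m, 0 < m -> - g t1 * exp (- k * t1) <= m /\ - h t1 * exp (- k * t1) <= m).
  { intros m Hm.
    destruct (Ph1 s ltac:(unfold s; lra)) as [G0 H00].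
    pose proof (exp_pos (- k * s)).
    apply (core g h dg dh x alpha (L + lam) b k s t1 m ltac:(unfold s; lra) ltac:(unfold b; lra) Hm).
    - intros t Ht. assert (Htt : t <= tau) by lra. destruct (Hd t Htt) as [D1 D2].
      destruct (Hineq t Htt) as [I1 I2]. pose proof (HpM1 t Ht). pose proof (Hxnn t Htt).
      assert (0 < b) by (unfold b; lra).
      repeat split; auto; unfold k; nra.
    - nra.
    - nra. }
  pose proof (exp_pos (- k * t1)).
  unfold g, h in *.
  split; apply Rnot_lt_le; intro Hn.
  - destruct (Hm (- (u t1 + K * (x t1 * x t1)) * exp (- k * t1) / 2)) as [A _]; [nra|]. nra.
  - destruct (Hm (- (L * x t1 - th t1) * exp (- k * t1) / 2)) as [_ A]; [nra|]. nra.
Qed.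

Lemma pos_nbhd (f : R -> R) p : continuity_pt f p -> 0 < f p ->
  exists d, 0 < d /\ forall t, Rabs (t - p) < d -> 0 < f t.
Proof.
  intros Hc Hp. pose proof (proj1 (continuity_pt_locally f p) Hc) as Hc2. clear Hc. rename Hc2 into Hc.
  destruct (Hc (mkposreal (f p) Hp)) as [d Hd].
  exists d. split; [apply cond_pos|]. intros t Ht.
  assert (B : ball p d t) by (unfold ball; simpl; unfold AbsRing_ball; simpl; exact Ht).
  specialize (Hd t B). simpl in Hd. apply Rabs_def2 in Hd. lra.
Qed.

Definition posp (a : R) := (a + Rabs a) / 2.
Definition Pf (M y : R) := - (y * y) / 2 + M * (y * y) * (y * y) / 4.

Lemma posp_pos a : 0 <= a -> posp a = a.
Proof. intros; unfold posp; rewrite Rabs_pos_eq; lra. Qed.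
Lemma posp_neg a : a <= 0 -> posp a = 0.
Proof. intros; unfold posp; rewrite Rabs_left1; lra. Qed.
Lemma posp_ge0 a : 0 <= posp a.
Proof. unfold posp. pose proof (Rle_abs (-a)). rewrite Rabs_Ropp in H. lra. Qed.

Lemma dl_Pf M (f : R -> R) t df : derivable_pt_lim f t df ->
  derivable_pt_lim (fun t => Pf M (f t)) t ((- f t + M * (f t * f t * f t)) * df).
Proof.
  intros H. apply (dl_comp f (Pf M)); auto.
  apply is_derive_Reals. unfold Pf. auto_derive. auto. field.
Qed.

Lemma Q_small M L y th : 0 < M -> M <= 1 -> 0 <= L -> 0 <= y -> M * (y * y) <= 1 -> th <= L * y ->
  posp th * posp th / 2 + Pf M y <= L * L / (2 * M).
Proof.
  intros HM HM1 HL Hy Hy1 Hth. unfold Pf.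
  assert (A : posp th * posp th <= L * L * (y * y)).
  { destruct (Rle_or_lt th 0). rewrite posp_neg by auto. nra.
    rewrite posp_pos by lra. nra. }
  assert (B : L * L * (y * y) <= L * L / M).
  { apply Rmult_le_reg_r with M; auto. replace (L * L / M * M) with (L * L) by (field; lra). nra. }
  assert (C : M * (y * y) * (y * y) <= y * y) by nra.
  replace (L * L / (2 * M)) with ((L * L / M) / 2) by (field; lra). nra.
Qed.

Lemma Q_bound lam alpha beta K L (x th u : R -> R) tau :
  0 <= lam -> 0 < K -> K < 1 -> 0 < L ->
  pos_separatrix_upto lam alpha beta x th u tau -> (forall t, t <= tau -> 0 <= x t) ->
  (forall t, t <= tau -> 0 <= u t + K * (x t * x t) /\ 0 <= L * x t - th t) ->
  forall t, t <= tau -> posp (th t) * posp (th t) / 2 + Pf (1 - K) (x t) <= L * L / (2 * (1 - K)) + 1.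
Proof.
  intros Hlam HK0 HK1 HL Hsep Hxnn Hgh t1 Ht1.
  set (M := 1 - K). set (C := L * L / (2 * M) + 1).
  set (Q := fun t => posp (th t) * posp (th t) / 2 + Pf M (x t)).
  change (Q t1 <= C). apply Rnot_lt_le. intro Hgt.
  assert (HM : 0 < M) by (unfold M; lra).
  assert (HM1 : M <= 1) by (unfold M; lra).
  assert (Qs : forall t, t <= tau -> M * (x t * x t) <= 1 -> Q t <= C - 1).
  { intros t Ht Hm. unfold Q, C. replace (L * L / (2 * M) + 1 - 1) with (L * L / (2 * M)) by ring.
    pose proof (Hxnn t Ht). destruct (Hgh t Ht).
    apply Q_small; auto; lra. }
  destruct (lim_small lam alpha beta x th u tau 1 Hsep ltac:(lra) t1) as [s [Hs [Hxs _]]].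
  assert (HQs : Q s < C).
  { assert (Q s <= C - 1); [|lra]. apply Qs; [lra|]. pose proof (Hxnn s ltac:(lra)).
    rewrite Rabs_pos_eq in Hxs by lra. nra. }
  assert (Dall : forall t, t <= tau -> derivable_pt_lim x t (th t) /\
     derivable_pt_lim th t (- lam * th t - x t * u t + x t - x t ^ 3)).
  { intros t Ht. destruct (sol_d lam alpha beta x th u tau t (proj1 Hsep) Ht) as [A [B _]]. auto. }
  destruct (barrier Q s t1 C Hs) as [p [eps [H1 [H2 [H3 [H4 H5]]]]]]; auto.
  { intros t Ht. destruct (Dall t ltac:(lra)) as [A B]. unfold Q. apply c_add.
    - unfold posp, Rdiv. apply c_mul; [|apply c_const]. apply c_mul; apply c_mul; try apply c_const;
      apply c_add; try (eapply dl_cont; exact B); apply c_abs; eapply dl_cont; exact B.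
    - eapply dl_cont. apply dl_Pf. exact A. }
  assert (Hp : p <= tau) by lra.
  destruct (Dall p Hp) as [Dx Dth].
  assert (Xp : 1 < M * (x p * x p)).
  { apply Rnot_le_lt. intro. pose proof (Qs p Hp H). lra. }
  pose proof (Hxnn p Hp) as X0.
  assert (Xp0 : 0 < x p) by (destruct (Rle_lt_or_eq_dec 0 (x p) X0); auto; rewrite <- e in Xp; lra).
  destruct (Hgh p Hp) as [G0 H0].
  destruct (Rle_or_lt (th p) 0) as [Tn|Tp].
  - assert (eps <= (- x p + M * (x p * x p * x p)) * th p).
    { apply (leftmax_eps (fun t => Pf M (x t)) _ s p t1 eps); auto. apply dl_Pf; auto.
      intros t Ht. specialize (H5 t Ht). unfold Q in H5. rewrite (posp_neg (th p) Tn) in H5.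
      pose proof (posp_ge0 (th t)). nra. }
    assert (0 <= - x p + M * (x p * x p * x p)) by nra.
    nra.
  - destruct (pos_nbhd th p (dl_cont _ _ _ Dth) Tp) as [d [Hd Hd2]].
    set (s' := Rmax s (p - d / 2)).
    assert (s <= s') by apply Rmax_l. assert (p - d / 2 <= s') by apply Rmax_r.
    assert (s' < p) by (unfold s'; apply Rmax_lub_lt; lra).
    set (dE := th p * (- lam * th p - x p * u p + x p - x p ^ 3) + (- x p + M * (x p * x p * x p)) * th p).
    assert (eps <= dE).
    { apply (leftmax_eps (fun t => th t * th t / 2 + Pf M (x t)) _ s' p t1 eps); auto.
      - unfold dE. apply dl_eq with (2 * th p * (- lam * th p - x p * u p + x p - x p ^ 3) * / 2 + (- x p + M * (x p * x p * x p)) * th p); [|field].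
        apply dl_add; [|apply dl_Pf; auto].
        unfold Rdiv. apply dl_eq with ((2 * th p * (- lam * th p - x p * u p + x p - x p ^ 3)) * / 2 + (th p * th p) * 0); [|ring].
        apply (dl_mul (fun t => th t * th t) (fun _ => / 2)). apply dl_sq; auto. apply dl_const.
      - intros t Ht. assert (0 < th t).
        { apply Hd2. apply Rabs_def1; lra. }
        specialize (H5 t ltac:(lra)). unfold Q in H5.
        rewrite (posp_pos (th t)), (posp_pos (th p)) in H5 by lra. exact H5. }
    unfold dE in *. unfold M in *.
    assert (x p * u p >= - K * (x p * x p * x p)) by nra.
    nra.
Qed.

Lemma x_from_Q M C y : 0 < M -> 0 < C -> 0 <= y -> Pf M y <= C -> y <= 4 / M + 8 * C / M + 2.
Proof.
  intros HM HC Hy HP. unfold Pf in HP.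
  set (Y := 4 / M + 8 * C / M + 1).
  assert (HMY : M * Y = 4 + 8 * C + M) by (unfold Y; field; lra).
  assert (HY1 : 1 <= Y).
  { unfold Y. assert (0 <= 4 / M) by (apply Rlt_le, Rdiv_lt_0_compat; lra).
    assert (0 <= 8 * C / M) by (apply Rlt_le, Rdiv_lt_0_compat; lra). lra. }
  assert (Hz : y * y <= Y).
  { apply Rnot_lt_le. intro Hz. set (z := y * y) in *.
    assert (M * z > 4 + 8 * C + M) by nra.
    assert (Mz4 : M * z / 8 >= 1 / 2) by lra.
    assert (- z / 2 + M * z * z / 4 >= z * (M * z / 8)) by nra.
    assert (z * (M * z / 8) > z * C) by (apply Rmult_lt_compat_l; lra).
    assert (z * C >= C) by nra. lra. }
  replace (4 / M + 8 * C / M + 2) with (Y + 1) by (unfold Y; ring).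
  nra.
Qed.

Lemma u_upper lam alpha beta (x th u : R -> R) tau Xb :
  0 < alpha -> 0 < beta -> 1 <= Xb ->
  pos_separatrix_upto lam alpha beta x th u tau -> (forall t, t <= tau -> 0 <= x t <= Xb) ->
  forall t, t <= tau -> u t <= beta * (Xb * Xb) / 2 + 1.
Proof.
  intros Ha Hb HX Hsep Hx t1 Ht1.
  set (Cw := beta * (Xb * Xb) / 2 + 1).
  set (w := fun t => u t + beta / 2 * (x t * x t)).
  assert (Hw : forall t, u t <= w t).
  { intros t. unfold w. assert (0 <= beta / 2 * (x t * x t)) by (apply Rmult_le_pos; nra). lra. }
  apply Rle_trans with (w t1); auto.
  apply Rnot_lt_le. intro Hgt.
  destruct (lim_small lam alpha beta x th u tau (1/2) Hsep ltac:(lra) t1) as [s [Hs [Hxs [_ Hus]]]].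
  destruct (barrier_d w (fun t => - alpha * u t) s t1 Cw Hs) as [p [H1 [H2 [H3 H4]]]]; auto.
  { intros t Ht. destruct (sol_d lam alpha beta x th u tau t (proj1 Hsep) ltac:(lra)) as [A [_ B]].
    unfold w. apply dl_eq with ((- alpha * u t - beta * x t * th t) + beta / 2 * (2 * x t * th t)); [|field].
    apply dl_add; auto. apply dl_scal. apply dl_sq; auto. }
  { unfold w, Cw. apply Rabs_def2 in Hxs. apply Rabs_def2 in Hus. destruct Hxs, Hus.
    assert (x s * x s <= 1/4) by nra. assert (1 <= Xb * Xb) by nra. nra. }
  destruct (Hx p ltac:(lra)).
  unfold w, Cw in H3. assert (x p * x p <= Xb * Xb) by nra.
  assert (beta / 2 * (x p * x p) <= beta * (Xb * Xb) / 2) by nra.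
  nra.
Qed.

Lemma th_lower lam alpha beta L (x th u : R -> R) tau Xb U :
  0 <= lam -> 0 < L -> 1 <= Xb -> 0 <= U ->
  pos_separatrix_upto lam alpha beta x th u tau -> (forall t, t <= tau -> 0 <= x t <= Xb) ->
  (forall t, t <= tau -> Rabs (u t) <= U) -> (forall t, t <= tau -> th t <= L * x t) ->
  forall t, t <= tau ->
    let C1 := Xb * U + Xb + Xb ^ 3 + 1 in
    let Cs := Xb + L * L * (Xb * Xb) / (2 * C1) + 1 + 1 / (2 * C1) in
    th t * th t <= 2 * C1 * Cs.
Proof.
  intros Hlam HL HX HU Hsep Hx Hu Hth t1 Ht1 C1 Cs.
  assert (HC1 : 1 <= C1) by (unfold C1; assert (0 <= Xb * U) by nra; assert (0 <= Xb ^ 3) by (apply pow_le; lra); lra).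
  set (S := fun t => x t + th t * th t / (2 * C1)).
  assert (HS : S t1 <= Cs).
  { apply Rnot_lt_le. intro Hgt.
    destruct (lim_small lam alpha beta x th u tau (1/2) Hsep ltac:(lra) t1) as [s [Hs [Hxs [Hths _]]]].
    destruct (barrier_d S (fun t => th t + 2 * th t * (- lam * th t - x t * u t + x t - x t ^ 3) / (2 * C1)) s t1 Cs Hs) as [p [H1 [H2 [H3 H4]]]]; auto.
    { intros t Ht. destruct (sol_d lam alpha beta x th u tau t (proj1 Hsep) ltac:(lra)) as [A [B _]].
      unfold S. apply dl_add; auto. unfold Rdiv.
      apply dl_eq with ((2 * th t * (- lam * th t - x t * u t + x t - x t ^ 3)) * / (2 * C1) + (th t * th t) * 0); [|ring].
      apply (dl_mul (fun t => th t * th t) (fun _ => / (2 * C1))). apply dl_sq; auto. apply dl_const. }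
    { unfold S, Cs. apply Rabs_def2 in Hxs. apply Rabs_def2 in Hths. destruct Hxs, Hths.
      assert (th s * th s <= 1) by nra.
      assert (th s * th s / (2 * C1) <= 1 / (2 * C1)) by (unfold Rdiv; apply Rmult_le_compat_r; [apply Rlt_le, Rinv_0_lt_compat; lra|lra]).
      assert (0 <= L * L * (Xb * Xb) / (2 * C1)) by (apply Rlt_le, Rdiv_lt_0_compat; [apply Rmult_lt_0_compat; apply Rmult_lt_0_compat; lra | lra]).
      lra. }
    assert (Hp : p <= tau) by lra.
    destruct (Hx p Hp) as [X0 X1]. pose proof (Hu p Hp) as U0. pose proof (Hth p Hp) as T0.
    destruct (Rle_or_lt 0 (th p)) as [Tp|Tn].
    - assert (th p <= L * Xb) by (apply Rle_trans with (L * x p); [lra| apply Rmult_le_compat_l; lra]).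
      assert (th p * th p <= L * L * (Xb * Xb)).
      { replace (L * L * (Xb * Xb)) with ((L * Xb) * (L * Xb)) by ring.
        apply Rmult_le_compat; lra. }
      assert (th p * th p / (2 * C1) <= L * L * (Xb * Xb) / (2 * C1)) by (unfold Rdiv; apply Rmult_le_compat_r; [apply Rlt_le, Rinv_0_lt_compat; lra|lra]).
      unfold S, Cs in H3.
      assert (0 < 1 / (2 * C1)) by (apply Rdiv_lt_0_compat; lra). lra.
    - assert (Hd : - lam * th p - x p * u p + x p - x p ^ 3 > - C1).
      { pose proof (Rle_abs (u p)). pose proof (Rle_abs (- u p)). rewrite Rabs_Ropp in *.
        assert (x p * u p <= Xb * U) by nra.
        assert (x p ^ 3 <= Xb ^ 3) by (apply pow_incr; lra).
        assert (- lam * th p >= 0) by nra.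
        unfold C1. lra. }
      set (D := - lam * th p - x p * u p + x p - x p ^ 3) in *.
      assert (E : th p + 2 * th p * D / (2 * C1) = th p * (C1 + D) / C1) by (field; lra).
      rewrite E in H4.
      assert (th p * (C1 + D) < 0) by nra.
      assert (th p * (C1 + D) / C1 < 0) by (apply Rdiv_neg_pos; lra).
      lra. }
  unfold S in HS. pose proof (Hx t1 Ht1).
  assert (th t1 * th t1 / (2 * C1) <= Cs) by lra.
  apply Rmult_le_reg_r with (/ (2 * C1)). apply Rinv_0_lt_compat; lra.
  replace (2 * C1 * Cs * / (2 * C1)) with Cs by (field; lra). exact H0.
Qed.

Theorem lemma2 (lam alpha beta L : R) :
  0 <= lam -> 0 < alpha -> 0 < beta ->
  alpha * (sqrt (lam ^ 2 + 4) + lam) > 2 * (beta - 2) ->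
  0 < L -> L > (sqrt (lam ^ 2 + 4) - lam) / 2 ->
  beta * L / (alpha + 2 * L) < 1 ->
  0 < 1 - beta * L / (alpha + 2 * L) ->
  exists Rb : R, 0 < Rb /\
    forall (x th u : R -> R) (tau : R),
      pos_separatrix_upto lam alpha beta x th u tau ->
      (forall t, t <= tau -> 0 <= x t) ->
      forall t, t <= tau ->
        x t <= Rb /\ Rabs (th t) <= Rb /\ Rabs (u t) <= Rb.
Proof.
  intros Hlam Ha Hb Hcond HL HL2 HK1 HM.
  set (K := beta * L / (alpha + 2 * L)) in *.
  assert (HK0 : 0 < K) by (unfold K; apply Rdiv_lt_0_compat; nra).
  assert (HKe : K * (alpha + 2 * L) = beta * L) by (unfold K; field; lra).
  assert (Hbk : 0 < beta - 2 * K).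
  { assert ((beta - 2 * K) * (alpha + 2 * L) = beta * alpha) by nra.
    assert (0 < beta * alpha) by nra. nra. }
  assert (Hc : 0 < L ^ 2 + lam * L - 1).
  { pose proof (sqrt_pos (lam ^ 2 + 4)).
    pose proof (sqrt_sqrt (lam ^ 2 + 4) ltac:(nra)).
    set (q := sqrt (lam ^ 2 + 4)) in *. nra. }
  set (M := 1 - K) in *.
  set (C := L * L / (2 * M) + 1).
  assert (HC : 0 < C) by (unfold C; assert (0 <= L * L / (2 * M)) by (apply Rlt_le, Rdiv_lt_0_compat; nra); lra).
  set (Xb := 4 / M + 8 * C / M + 2).
  assert (HXb : 1 <= Xb).
  { unfold Xb. assert (0 <= 4 / M) by (apply Rlt_le, Rdiv_lt_0_compat; lra).
    assert (0 <= 8 * C / M) by (apply Rlt_le, Rdiv_lt_0_compat; lra). lra. }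
  set (Cw := beta * (Xb * Xb) / 2 + 1).
  set (U := Cw + K * (Xb * Xb)).
  assert (HXX : 1 <= Xb * Xb) by (pose proof (Rmult_le_compat 1 Xb 1 Xb ltac:(lra) ltac:(lra) HXb HXb); lra).
  assert (HU : 0 <= U).
  { unfold U, Cw. assert (0 <= beta * (Xb * Xb)) by (apply Rmult_le_pos; lra).
    assert (0 <= K * (Xb * Xb)) by (apply Rmult_le_pos; lra). lra. }
  set (C1 := Xb * U + Xb + Xb ^ 3 + 1).
  set (Cs := Xb + L * L * (Xb * Xb) / (2 * C1) + 1 + 1 / (2 * C1)).
  assert (HC1 : 1 <= C1) by (unfold C1; assert (0 <= Xb * U) by nra; assert (0 <= Xb ^ 3) by (apply pow_le; lra); lra).
  assert (HCs : 0 < Cs).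
  { unfold Cs. assert (0 <= L * L * (Xb * Xb) / (2 * C1)) by (apply Rlt_le, Rdiv_lt_0_compat; [apply Rmult_lt_0_compat; apply Rmult_lt_0_compat; lra | lra]).
    assert (0 < 1 / (2 * C1)) by (apply Rdiv_lt_0_compat; lra). lra. }
  set (Tb := 2 * C1 * Cs + 1).
  assert (HTb : 1 <= Tb) by (unfold Tb; nra).
  exists (Xb + L * Xb + U + Tb). split; [nra|].
  intros x th u tau Hsep Hxnn t Ht.
  pose proof (gh_nonneg lam alpha beta L K x th u tau Hlam Ha Hb HL HKe HK0 Hbk Hc HM Hsep Hxnn) as Hgh.
  pose proof (Q_bound lam alpha beta K L x th u tau Hlam HK0 HK1 HL Hsep Hxnn Hgh) as HQ.
  assert (Hx : forall t, t <= tau -> 0 <= x t <= Xb).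
  { intros s Hs. split; [auto|]. unfold Xb. apply x_from_Q; auto.
    specialize (HQ s Hs). pose proof (posp_ge0 (th s)).
    assert (0 <= posp (th s) * posp (th s) / 2) by nra. fold M C in HQ. lra. }
  pose proof (u_upper lam alpha beta x th u tau Xb Ha Hb HXb Hsep Hx) as Huu.
  assert (Hu : forall t, t <= tau -> Rabs (u t) <= U).
  { intros s Hs. destruct (Hgh s Hs) as [G _]. destruct (Hx s Hs).
    pose proof (Huu s Hs). fold Cw in H1.
    assert (x s * x s <= Xb * Xb) by nra.
    assert (K * (x s * x s) <= K * (Xb * Xb)) by (apply Rmult_le_compat_l; lra).
    apply Rabs_le. unfold U. assert (0 <= K * (Xb * Xb)) by (apply Rmult_le_pos; lra). assert (0 <= Cw) by (unfold Cw; assert (0 <= beta * (Xb * Xb)) by (apply Rmult_le_pos; lra); lra). split; lra. }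
  assert (Hth : forall t, t <= tau -> th t <= L * x t).
  { intros s Hs. destruct (Hgh s Hs). lra. }
  pose proof (th_lower lam alpha beta L x th u tau Xb U Hlam HL HXb HU Hsep Hx Hu Hth t Ht) as Hsq.
  cbv zeta in Hsq. fold C1 in Hsq. fold Cs in Hsq.
  destruct (Hx t Ht) as [X0 X1]. pose proof (Hu t Ht). pose proof (Hth t Ht).
  assert (L * x t <= L * Xb) by (apply Rmult_le_compat_l; lra).
  assert (0 <= L * Xb) by nra.
  repeat split.
  - lra.
  - apply Rabs_le. split.
    + apply Rnot_lt_le. intro Hn. assert (HTbe : Tb = 2 * C1 * Cs + 1) by reflexivity.
      clearbody K M C Xb Cw U C1 Cs Tb. assert (th t < - Tb) by lra.
      assert (Tb * Tb < (- th t) * (- th t)) by (apply Rmult_le_0_lt_compat; lra).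
      assert (Tb <= Tb * Tb) by (pose proof (Rmult_le_compat_l Tb 1 Tb ltac:(lra) HTb); lra).
      lra.
    + lra.
  - lra.
Qed.
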